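(* Let $f,g$ be real analytic functions on $[-1,1]$ and consider the Abel equation $$x'(t)=f(t)x^3+g(t)x^2,\qquad t\in[-1,1].$$ If this equation has a center at $x=0$, then $$m_k=\int_{-1}^1 f(t)\,(G(t))^k\,dt=0,\qquad k=0,1,2,$$ where $G(t)=\int_{-1}^t g(s)\,ds$.
   Context: The Abel equation $x'=f(t)x^3+g(t)x^2$ on $[-1,1]$ (with $x$ real) is said to have a center at $x=0$ if every solution $x(t)$ whose initial value $x(-1)$ is small enough in absolute value is defined on $[-1,1]$ and satisfies $x(-1)=x(1)$. *)

(* Defs.v *)
From Stdlib Require Import Reals.
From Coquelicot Require Import Coquelicot.
Open Scope R_scope.

Definition real_analytic_on_I (f : R -> R) : Prop :=
  forall t0, -1 <= t0 <= 1 ->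
    exists (a : nat -> R) (r : R), 0 < r /\
      forall t, Rabs (t - t0) < r -> is_pseries a (t - t0) (f t).

Definition abel_solution (f g x : R -> R) : Prop :=
  forall t, -1 <= t <= 1 -> is_derive x t (f t * (x t) ^ 3 + g t * (x t) ^ 2).

Definition abel_center (f g : R -> R) : Prop :=
  exists delta, 0 < delta /\
    forall x0, Rabs x0 < delta ->
      (exists x, abel_solution f g x /\ x (-1) = x0) /\
      (forall x, abel_solution f g x -> x (-1) = x0 -> x 1 = x0).

(* Main.v *)
Require Import Defs.
From Stdlib Require Import Reals Lra Lia Classical.
From Coquelicot Require Import Coquelicot.
Open Scope R_scope.

Lemma cont_eps (h : R -> R) (t : R) : continuous h t ->
  forall eps, 0 < eps -> exists d, 0 < d /\ forall s, Rabs (s - t) < d -> Rabs (h s - h t) < eps.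
Proof.
  intros Hc eps He.
  apply continuity_pt_filterlim in Hc. rewrite continuity_pt_locally in Hc.
  destruct (Hc (mkposreal eps He)) as [d Hd].
  exists d. split; [apply cond_pos|]. intros s Hs. apply Hd. exact Hs.
Qed.

Lemma eps_cont (h : R -> R) (t : R) :
  (forall eps, 0 < eps -> exists d, 0 < d /\ forall s, Rabs (s - t) < d -> Rabs (h s - h t) < eps) ->
  continuous h t.
Proof.
  intros H. apply continuity_pt_filterlim. apply continuity_pt_locally.
  intros eps. destruct (H eps (cond_pos eps)) as [d [Hd Hs]].
  exists (mkposreal d Hd). intros s Hb. apply Hs. exact Hb.
Qed.

Lemma closed_lim (h : R -> R) (a t lo hi : R) : continuous h t -> a < t ->
  (forall s, a <= s < t -> lo <= h s <= hi) -> lo <= h t <= hi.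
Proof.
  intros Hc Hat Hs.
  destruct (Rle_or_lt lo (h t)) as [H1|H1]; destruct (Rle_or_lt (h t) hi) as [H2|H2]; try lra.
  - destruct (cont_eps h t Hc (h t - hi)) as [d [Hd Hd']]; [lra|].
    set (s := Rmax a (t - d/2)).
    assert (a <= s < t) by (unfold s; unfold Rmax; destruct Rle_dec; lra).
    assert (Rabs (s - t) < d) by (unfold s, Rmax; destruct Rle_dec; apply Rabs_def1; lra).
    specialize (Hd' s H0). specialize (Hs s H). apply Rabs_def2 in Hd'. lra.
  - destruct (cont_eps h t Hc (lo - h t)) as [d [Hd Hd']]; [lra|].
    set (s := Rmax a (t - d/2)).
    assert (a <= s < t) by (unfold s; unfold Rmax; destruct Rle_dec; lra).
    assert (Rabs (s - t) < d) by (unfold s, Rmax; destruct Rle_dec; apply Rabs_def1; lra).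
    specialize (Hd' s H0). specialize (Hs s H). apply Rabs_def2 in Hd'. lra.
  - destruct (cont_eps h t Hc (lo - h t)) as [d [Hd Hd']]; [lra|].
    set (s := Rmax a (t - d/2)).
    assert (a <= s < t) by (unfold s; unfold Rmax; destruct Rle_dec; lra).
    assert (Rabs (s - t) < d) by (unfold s, Rmax; destruct Rle_dec; apply Rabs_def1; lra).
    specialize (Hd' s H0). specialize (Hs s H). apply Rabs_def2 in Hd'. lra.
Qed.

Lemma open_nbhd (h : R -> R) (t lo hi : R) : continuous h t -> lo < h t < hi ->
  exists d, 0 < d /\ forall s, Rabs (s - t) < d -> lo < h s < hi.
Proof.
  intros Hc Hb.
  destruct (cont_eps h t Hc (Rmin (h t - lo) (hi - h t))) as [d [Hd Hd']].
  { apply Rmin_pos; lra. }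
  exists d. split; auto. intros s Hs. specialize (Hd' s Hs). apply Rabs_def2 in Hd'.
  pose proof (Rmin_l (h t - lo) (hi - h t)). pose proof (Rmin_r (h t - lo) (hi - h t)). lra.
Qed.

Lemma CI (P : R -> Prop) (a b : R) : a <= b ->
  (forall t, a <= t <= b -> (forall s, a <= s < t -> P s) ->
     exists d, 0 < d /\ forall s, a <= s < t + d -> P s) ->
  forall t, a <= t <= b -> P t.
Proof.
  intros Hab H.
  set (E := fun t => a <= t <= b /\ forall s, a <= s < t -> P s).
  assert (HB : bound E) by (exists b; intros t [Ht _]; lra).
  assert (HE : exists t, E t) by (exists a; split; [lra| intros s Hs; lra]).
  destruct (completeness E HB HE) as [T [HT1 HT2]].
  assert (HaT : a <= T) by (apply HT1; split; [lra| intros s Hs; lra]).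
  assert (HTb : T <= b) by (apply HT2; intros t [Ht _]; lra).
  assert (Hbel : forall s, a <= s < T -> P s).
  { intros s Hs. destruct (classic (P s)) as [Hp|Hn]; auto. exfalso.
    assert (T <= s); [|lra]. apply HT2. intros t [Ht Ht2].
    destruct (Rle_or_lt t s); auto. exfalso. apply Hn. apply Ht2. lra. }
  destruct (H T (conj HaT HTb) Hbel) as [d [Hd Hd']].
  assert (HTe : T = b).
  { destruct (Rle_or_lt b T) as [Hle|Hlt]; [lra|]. exfalso.
    set (t' := Rmin b (T + d/2)).
    assert (T < t') by (unfold t', Rmin; destruct Rle_dec; lra).
    assert (t' <= T); [|lra]. apply HT1. split.
    - unfold t', Rmin; destruct Rle_dec; lra.
    - intros s Hs. apply Hd'. unfold t', Rmin in Hs; destruct Rle_dec in Hs; lra. }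
  intros t Ht. apply Hd'. lra.
Qed.
Lemma exd_cont (f : R -> R) (x : R) : ex_derive f x -> continuous f x.
Proof. intros H. exact (ex_derive_continuous (K:=R_AbsRing) (V:=R_NormedModule) f x H). Qed.

Lemma analytic_cont (f : R -> R) : real_analytic_on_I f ->
  forall t0, -1 <= t0 <= 1 -> continuous f t0.
Proof.
  intros Hf t0 Ht0. destruct (Hf t0 Ht0) as [a [r [Hr Ha]]].
  set (y := r / 2).
  assert (Hy : is_pseries a y (f (t0 + y))).
  { replace y with (t0 + y - t0) at 1 by ring. apply Ha.
    replace (t0 + y - t0) with y by ring. unfold y. rewrite Rabs_pos_eq; lra. }
  assert (Hrad : Rbar_lt (Rabs 0) (CV_radius a)).
  { destruct (Rbar_lt_le_dec (CV_radius a) (Rabs y)) as [Hlt|Hle].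
    - exfalso. apply (CV_disk_outside a y Hlt).
      assert (He : ex_series (fun k => scal (pow_n y k) (a k))) by (eexists; exact Hy).
      apply ex_series_lim_0 in He.
      eapply is_lim_seq_ext; [|exact He]. intros n. simpl.
      rewrite pow_n_pow. unfold scal; simpl. unfold mult; simpl. ring.
    - rewrite Rabs_R0. eapply Rbar_lt_le_trans; [|exact Hle].
      simpl. unfold y. rewrite Rabs_pos_eq; lra. }
  apply continuous_ext_loc with (g := fun t => PSeries a (t - t0)).
  - exists (mkposreal r Hr). intros z Hz. apply is_pseries_unique. apply Ha.
    exact Hz.
  - apply (continuous_comp (fun t => t - t0) (PSeries a) t0).
    + apply exd_cont; auto_derive; auto.
    + rewrite Rminus_diag. apply exd_cont. apply ex_derive_PSeries. exact Hrad.
Qed.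
Lemma inv_band1 (y c K : R) : 0 < K < c -> 0 < y -> Rabs (/y - c) <= K ->
  /(c+K) <= y <= /(c-K).
Proof.
  intros HK Hy Ha.
  assert (Hb : c - K <= /y <= c + K) by (unfold Rabs in Ha; destruct Rcase_abs in Ha; lra).
  assert (Hiy : 0 < /y) by (apply Rinv_0_lt_compat; lra).
  rewrite <- (Rinv_inv y). split.
  - apply Rinv_le_contravar; lra.
  - apply Rinv_le_contravar; lra.
Qed.

Lemma inv_band2 (y c K : R) : 0 < K < c -> /(c+K) <= y <= /(c-K) ->
  0 < y /\ Rabs (/y - c) <= K.
Proof.
  intros HK Hb.
  assert (H1 : 0 < /(c+K)) by (apply Rinv_0_lt_compat; lra).
  assert (H2 : 0 < y) by lra.
  split; auto.
  assert (/y <= c + K).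
  { rewrite <- (Rinv_inv (c+K)). apply Rinv_le_contravar; lra. }
  assert (c - K <= /y).
  { rewrite <- (Rinv_inv (c-K)). apply Rinv_le_contravar; lra. }
  unfold Rabs; destruct Rcase_abs; lra.
Qed.

Lemma inv_band_strict (y c K K' : R) : 0 < K < K' -> K' < c -> 0 < y -> Rabs (/y - c) <= K ->
  /(c+K') < y < /(c-K').
Proof.
  intros HK HK' Hy Ha.
  assert (Hb : c - K <= /y <= c + K) by (unfold Rabs in Ha; destruct Rcase_abs in Ha; lra).
  assert (Hiy : 0 < /y) by (apply Rinv_0_lt_compat; lra).
  rewrite <- (Rinv_inv y). split.
  - apply Rinv_lt_contravar; [apply Rmult_lt_0_compat|]; lra.
  - apply Rinv_lt_contravar; [apply Rmult_lt_0_compat|]; lra.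
Qed.

Lemma sol_cont (f g x : R -> R) : abel_solution f g x ->
  forall t, -1 <= t <= 1 -> continuous x t.
Proof. intros Hs t Ht. apply exd_cont. eexists. apply Hs; auto. Qed.

Lemma w_deriv (f g x : R -> R) : abel_solution f g x ->
  forall t, -1 <= t <= 1 -> x t <> 0 ->
  is_derive (fun y => / x y) t (-(f t * x t + g t)).
Proof.
  intros Hs t Ht Hx.
  assert (E : -(f t * x t ^ 3 + g t * x t ^ 2) / x t ^ 2 = -(f t * x t + g t)) by (field; auto).
  rewrite <- E. apply is_derive_inv; auto.
Qed.

Lemma step1 (f g x : R -> R) (M c : R) : 1 <= M ->
  (forall t, -1 <= t <= 1 -> Rabs (f t) <= M /\ Rabs (g t) <= M) ->
  16 * M <= c -> abel_solution f g x -> x (-1) = / c ->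
  forall s, -1 <= s <= 1 -> (forall u, -1 <= u <= s -> /(c+8*M) < x u < /(c-8*M)) ->
  0 < x s /\ Rabs (/ x s - c) <= 4 * M.
Proof.
  intros HM Hb Hc Hs Hx0 s Hs1 HP.
  assert (Hpos : forall u, -1 <= u <= s -> 0 < x u).
  { intros u Hu. specialize (HP u Hu). assert (0 < /(c+8*M)) by (apply Rinv_0_lt_compat; lra). lra. }
  assert (Hle1 : /(c-8*M) <= 1).
  { rewrite <- Rinv_1. apply Rinv_le_contravar; lra. }
  split; [apply Hpos; lra|].
  destruct (MVT_gen (fun y => / x y) (-1) s (fun y => -(f y * x y + g y))) as [xi [Hxi Heq]].
  - intros y Hy. rewrite Rmin_left in Hy by lra. rewrite Rmax_right in Hy by lra.
    apply (w_deriv f g x Hs); [lra|]. assert (0 < x y) by (apply Hpos; lra). lra.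
  - intros y Hy. rewrite Rmin_left in Hy by lra. rewrite Rmax_right in Hy by lra.
    apply continuity_pt_filterlim. change (continuous (fun y => / x y) y). apply exd_cont. eexists.
    apply (w_deriv f g x Hs); [lra|]. assert (0 < x y) by (apply Hpos; lra). lra.
  - rewrite Rmin_left in Hxi by lra. rewrite Rmax_right in Hxi by lra.
    rewrite Hx0, Rinv_inv in Heq.
    replace (/ x s - c) with (- (f xi * x xi + g xi) * (s - -1)) by lra.
    destruct (Hb xi) as [Hf Hg]; [lra|].
    assert (Hx1 : Rabs (x xi) <= 1).
    { specialize (HP xi Hxi). assert (0 < x xi) by (apply Hpos; lra).
      rewrite Rabs_pos_eq; lra. }
    assert (Hd : Rabs (f xi * x xi + g xi) <= 2 * M).
    { eapply Rle_trans; [apply Rabs_triang|]. rewrite Rabs_mult.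
      assert (Rabs (f xi) * Rabs (x xi) <= M * 1).
      { apply Rmult_le_compat; auto using Rabs_pos. }
      lra. }
    rewrite Rabs_mult, Rabs_Ropp. rewrite (Rabs_pos_eq (s - -1)) by lra.
    assert (0 <= Rabs (f xi * x xi + g xi)) by apply Rabs_pos.
    nra.
Qed.

Lemma ode_bound (f g x : R -> R) (M c : R) : 1 <= M ->
  (forall t, -1 <= t <= 1 -> Rabs (f t) <= M /\ Rabs (g t) <= M) ->
  16 * M <= c -> abel_solution f g x -> x (-1) = / c ->
  forall t, -1 <= t <= 1 -> 0 < x t /\ Rabs (/ x t - c) <= 4 * M.
Proof.
  intros HM Hb Hc Hs Hx0.
  assert (HP : forall t, -1 <= t <= 1 -> /(c+8*M) < x t < /(c-8*M)).
  { apply CI; [lra|]. intros t Ht Hbef.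
    assert (HQ : /(c+4*M) <= x t <= /(c-4*M)).
    { destruct (Req_dec t (-1)) as [E|E].
      - subst t. rewrite Hx0. split; apply Rinv_le_contravar; lra.
      - apply (closed_lim x (-1)); [apply (sol_cont f g x Hs); lra|lra|].
        intros s Hs1. apply inv_band1; [lra| |].
        + apply (step1 f g x M c); auto; try lra. intros u Hu. apply Hbef. lra.
        + apply (step1 f g x M c); auto; try lra. intros u Hu. apply Hbef. lra. }
    apply inv_band2 in HQ; [|lra]. destruct HQ as [HQ1 HQ2].
    assert (HPt : /(c+8*M) < x t < /(c-8*M)) by (apply (inv_band_strict _ _ (4*M)); auto; lra).
    destruct (open_nbhd x t _ _ (sol_cont f g x Hs t Ht) HPt) as [d [Hd Hd']].
    exists d. split; auto. intros s Hs1.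
    destruct (Rlt_or_le s t). { apply Hbef; lra. }
    apply Hd'. rewrite Rabs_pos_eq; lra. }
  intros t Ht. apply (step1 f g x M c); auto. intros u Hu. apply HP. lra.
Qed.

Definition CC (h : R -> R) := forall t : R, continuous h t.

Lemma CC_plus (u v : R -> R) : CC u -> CC v -> CC (fun t => u t + v t).
Proof. intros Hu Hv t. exact (continuous_plus (U:=R_UniformSpace) (K:=R_AbsRing) (V:=R_NormedModule) u v t (Hu t) (Hv t)). Qed.
Lemma CC_mult (u v : R -> R) : CC u -> CC v -> CC (fun t => u t * v t).
Proof. intros Hu Hv t. exact (continuous_mult (U:=R_UniformSpace) (K:=R_AbsRing) u v t (Hu t) (Hv t)). Qed.
Lemma CC_opp (u : R -> R) : CC u -> CC (fun t => - u t).
Proof. intros Hu t. exact (continuous_opp (U:=R_UniformSpace) (K:=R_AbsRing) (V:=R_NormedModule) u t (Hu t)). Qed.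
Lemma CC_const (k : R) : CC (fun _ => k).
Proof. intros t. apply continuous_const. Qed.
Lemma CC_minus (u v : R -> R) : CC u -> CC v -> CC (fun t => u t - v t).
Proof. intros Hu Hv. apply (CC_plus u (fun t => - v t)); auto. apply CC_opp; auto. Qed.
Lemma CC_pow (u : R -> R) (n : nat) : CC u -> CC (fun t => u t ^ n).
Proof. intros Hu. induction n; simpl. apply CC_const. apply CC_mult; auto. Qed.

Definition clamp (t : R) := Rmax (-1) (Rmin 1 t).
Definition ext (phi : R -> R) (t : R) := phi (clamp t).

Lemma clamp_in t : -1 <= clamp t <= 1.
Proof. unfold clamp, Rmax, Rmin. repeat destruct Rle_dec; lra. Qed.
Lemma clamp_id t : -1 <= t <= 1 -> clamp t = t.
Proof. intros H. unfold clamp, Rmax, Rmin. repeat destruct Rle_dec; lra. Qed.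
Lemma clamp_lip s t : Rabs (clamp s - clamp t) <= Rabs (s - t).
Proof. unfold clamp, Rmax, Rmin. repeat destruct Rle_dec; unfold Rabs; repeat destruct Rcase_abs; lra. Qed.
Lemma clamp_cont t : continuous clamp t.
Proof.
  apply eps_cont. intros eps He. exists eps. split; auto. intros s Hs.
  eapply Rle_lt_trans; [apply clamp_lip|exact Hs].
Qed.
Lemma ext_cont (phi : R -> R) : (forall t, -1 <= t <= 1 -> continuous phi t) -> CC (ext phi).
Proof.
  intros H t. unfold ext.
  apply (continuous_comp (U:=R_UniformSpace) (V:=R_UniformSpace) (W:=R_UniformSpace) clamp phi t).
  apply clamp_cont. apply H. apply clamp_in.
Qed.
Lemma ext_id (phi : R -> R) t : -1 <= t <= 1 -> ext phi t = phi t.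
Proof. intros H. unfold ext. rewrite clamp_id; auto. Qed.

Lemma exR (h : R -> R) a b : CC h -> ex_RInt h a b.
Proof. intros H. apply (ex_RInt_continuous (V:=R_CompleteNormedModule)). intros z _. apply H. Qed.

Lemma deriv_prim (h : R -> R) a : CC h -> forall t, is_derive (fun s => RInt h a s) t (h t).
Proof.
  intros H t. apply (is_derive_RInt (V:=R_CompleteNormedModule) h (fun s => RInt h a s) a t).
  - exists (mkposreal 1 Rlt_0_1). intros y _. apply RInt_correct. apply exR; auto.
  - apply H.
Qed.

Lemma CC_prim (h : R -> R) a : CC h -> CC (fun s => RInt h a s).
Proof. intros H t. apply exd_cont. eexists. apply deriv_prim; auto. Qed.

Lemma int_bound (h : R -> R) (a b B : R) : a <= b -> CC h ->
  (forall t, a <= t <= b -> Rabs (h t) <= B) -> Rabs (RInt h a b) <= (b - a) * B.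
Proof. intros Hab Hh HB. apply abs_RInt_le_const; auto. apply exR; auto. Qed.

Lemma RInt_split3 (h u1 u2 u3 : R -> R) a b : CC u1 -> CC u2 -> CC u3 ->
  (forall t, h t = u1 t + u2 t + u3 t) ->
  RInt h a b = RInt u1 a b + RInt u2 a b + RInt u3 a b.
Proof.
  intros H1 H2 H3 He.
  rewrite (RInt_ext h (fun t => plus (plus (u1 t) (u2 t)) (u3 t))).
  2:{ intros x _. rewrite He. reflexivity. }
  rewrite (RInt_plus (V:=R_CompleteNormedModule)). rewrite (RInt_plus (V:=R_CompleteNormedModule)). reflexivity.
  all: try apply exR; auto.
  apply (CC_plus u1 u2); auto.
Qed.

Lemma RInt_scalR (u : R -> R) (k : R) a b : CC u ->
  RInt (fun t => k * u t) a b = k * RInt u a b.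
Proof.
  intros H. exact (RInt_scal (V:=R_CompleteNormedModule) u a b k (exR u a b H)).
Qed.

Lemma zero_of_small (A B c0 : R) : 0 < c0 ->
  (forall c, c0 <= c -> Rabs A <= B / c) -> A = 0.
Proof.
  intros Hc0 H. destruct (Req_dec A 0) as [E|E]; auto. exfalso.
  assert (HA : 0 < Rabs A) by (apply Rabs_pos_lt; auto).
  assert (HB : 0 <= B).
  { specialize (H c0 (Rle_refl _)). assert (0 <= B / c0) by lra.
    assert (0 <= B / c0 * c0) by (apply Rmult_le_pos; lra).
    unfold Rdiv in H1. rewrite Rmult_assoc, Rinv_l in H1; lra. }
  set (c := Rmax c0 (2 * B / Rabs A + 1)).
  assert (Hc : c0 <= c) by apply Rmax_l.
  assert (Hc2 : 2 * B / Rabs A + 1 <= c) by apply Rmax_r.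
  specialize (H c Hc).
  assert (Hcp : 0 < c) by lra.
  assert (Rabs A * c <= B).
  { apply (Rmult_le_compat_r c) in H; [|lra]. unfold Rdiv in H.
    rewrite Rmult_assoc, Rinv_l in H; lra. }
  assert (2 * B / Rabs A * Rabs A = 2 * B) by (field; lra).
  nra.
Qed.

Lemma ident (f g x : R -> R) (c : R) :
  (forall t, -1 <= t <= 1 -> continuous f t) ->
  (forall t, -1 <= t <= 1 -> continuous g t) ->
  abel_solution f g x -> x (-1) = / c -> c <> 0 ->
  (forall t, -1 <= t <= 1 -> 0 < x t) ->
  forall t, -1 <= t <= 1 ->
    / x t = c - RInt (ext g) (-1) t - RInt (fun s => ext f s * ext x s) (-1) t.
Proof.
  intros Hf Hg Hs Hx0 Hc Hpos t Ht.
  assert (CCg : CC (ext g)) by (apply ext_cont; auto).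
  assert (CCfx : CC (fun s => ext f s * ext x s)).
  { apply CC_mult; apply ext_cont; auto. apply (sol_cont f g x Hs). }
  set (h := fun y => plus (plus (/ x y) (RInt (ext g) (-1) y)) (RInt (fun s => ext f s * ext x s) (-1) y)).
  assert (Hd : forall y, -1 <= y <= 1 -> is_derive h y 0).
  { intros y Hy.
    assert (Hxy : x y <> 0) by (specialize (Hpos y Hy); lra).
    pose proof (w_deriv f g x Hs y Hy Hxy) as d1.
    pose proof (deriv_prim (ext g) (-1) CCg y) as d2.
    pose proof (deriv_prim _ (-1) CCfx y) as d3.
    pose proof (is_derive_plus _ _ y _ _ (is_derive_plus _ _ y _ _ d1 d2) d3) as d.
    replace 0 with (plus (plus (- (f y * x y + g y)) (ext g y)) (ext f y * ext x y)).
    exact d. rewrite !ext_id by auto. unfold plus; simpl. ring. }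
  destruct (MVT_gen h (-1) t (fun _ => 0)) as [xi [Hxi Heq]].
  - intros y Hy. rewrite Rmin_left in Hy by lra. rewrite Rmax_right in Hy by lra.
    apply Hd. lra.
  - intros y Hy. rewrite Rmin_left in Hy by lra. rewrite Rmax_right in Hy by lra.
    apply continuity_pt_filterlim. change (continuous h y). apply exd_cont. eexists. apply Hd. lra.
  - assert (E : h t = h (-1)) by lra.
    unfold h in E. rewrite !RInt_point in E. rewrite Hx0, Rinv_inv in E.
    unfold plus, zero in E; simpl in E. lra.
Qed.

Lemma int_fxe_zero (F X : R -> R) : CC F -> CC X ->
  let e := fun t => RInt (fun s => F s * X s) (-1) t in
  RInt (fun t => e t * (F t * X t) + (F t * X t) * e t) (-1) 1 = e 1 * e 1 - e (-1) * e (-1).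
Proof.
  intros HF HX e.
  assert (CCfx : CC (fun s => F s * X s)) by (apply CC_mult; auto).
  apply is_RInt_unique.
  apply (is_RInt_derive (V:=R_CompleteNormedModule) (fun t => e t * e t)).
  - intros y _. pose proof (deriv_prim _ (-1) CCfx y) as d.
    pose proof (is_derive_mult _ _ y _ _ d d) as dm.
    replace (e y * (F y * X y) + F y * X y * e y) with
      (plus (mult (F y * X y) (e y)) (mult (e y) (F y * X y))).
    apply dm. intros; unfold mult; simpl; ring.
    unfold plus, mult; simpl. unfold e. ring.
  - intros y _. apply (CC_plus (fun t => e t * (F t * X t)) (fun t => F t * X t * e t)).
    + apply CC_mult; auto. apply CC_prim; auto.
    + apply CC_mult; auto. apply CC_prim; auto.
Qed.

Lemma abs_mul_le (x y A B : R) : Rabs x <= A -> Rabs y <= B -> Rabs (x * y) <= A * B.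
Proof. intros H1 H2. rewrite Rabs_mult. apply Rmult_le_compat; auto using Rabs_pos. Qed.

Lemma bnd0 (M c al xi : R) : 1 <= M -> 16 * M <= c -> Rabs al <= 4 * M ->
  0 < xi <= 2 / c -> xi * (c - al) = 1 -> Rabs (c * xi - 1) <= 8 * M / c.
Proof.
  intros HM Hc Ha Hx Hid.
  replace (c * xi - 1) with (al * xi) by (transitivity (c * xi - xi * (c - al)); [ring| rewrite Hid; ring]).
  replace (8 * M / c) with (4 * M * (2 / c)) by (field; lra).
  apply abs_mul_le; auto. rewrite Rabs_pos_eq; lra.
Qed.

Lemma bnd1 (M c al xi ep : R) : 1 <= M -> 16 * M <= c -> Rabs al <= 4 * M ->
  0 < xi <= 2 / c -> xi * (c - al) = 1 -> Rabs ep <= 4 * M / c ->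
  Rabs (ep + (c ^ 2 * xi - c - al)) <= 36 * M ^ 2 / c.
Proof.
  intros HM Hc Ha Hx Hid He.
  replace (c ^ 2 * xi - c - al) with (al * (al * xi))
    by (transitivity (c ^ 2 * xi - c - al - (c + al) * (xi * (c - al) - 1)); [ring| rewrite Hid; ring]).
  assert (Hc0 : 0 < / c) by (apply Rinv_0_lt_compat; lra).
  assert (H1 : Rabs (al * (al * xi)) <= 4 * M * (4 * M * (2 / c))).
  { apply abs_mul_le; auto. apply abs_mul_le; auto. rewrite Rabs_pos_eq; lra. }
  eapply Rle_trans; [apply Rabs_triang|].
  unfold Rdiv in *.
  assert (HMM : M * / c <= M ^ 2 * / c) by (apply Rmult_le_compat_r; nra).
  replace (4 * M * (4 * M * (2 * / c))) with (32 * (M ^ 2 * / c)) in H1 by ring.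
  replace (36 * M ^ 2 * / c) with (36 * (M ^ 2 * / c)) by ring.
  replace (4 * M * / c) with (4 * (M * / c)) in He by ring.
  lra.
Qed.

Lemma bnd2 (M c al xi ep ga : R) : 1 <= M -> 16 * M <= c -> Rabs al <= 4 * M ->
  0 < xi <= 2 / c -> xi * (c - al) = 1 -> Rabs ep <= 4 * M / c -> ga = al - ep ->
  Rabs (c * ep * (1 - c * xi) + (2 * ga * ep + ep ^ 2) + (c ^ 3 * xi - c ^ 2 - c * al - al ^ 2))
    <= 204 * M ^ 3 / c.
Proof.
  intros HM Hc Ha Hx Hid He Hga.
  assert (Hcp : 0 < c) by lra.
  assert (Hc0 : 0 < / c) by (apply Rinv_0_lt_compat; lra).
  assert (Hcx : c * xi <= 2).
  { destruct Hx as [_ Hx]. unfold Rdiv in Hx. apply (Rmult_le_compat_l c) in Hx; [|lra].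
    replace (c * (2 * / c)) with 2 in Hx by (field; lra). exact Hx. }
  assert (Hs : 4 * M / c <= 1 / 4).
  { unfold Rdiv. replace (1 * / 4) with (4 * M * / (16 * M)) by (field; lra).
    apply Rmult_le_compat_l; [lra|]. apply Rinv_le_contravar; lra. }
  assert (E1 : c * ep * (1 - c * xi) = - (ep * al * (c * xi)))
    by (transitivity (c * ep * (1 - c * xi) + c * ep * (xi * (c - al) - 1)); [rewrite Hid; ring| ring]).
  assert (E2 : c ^ 3 * xi - c ^ 2 - c * al - al ^ 2 = al * al * al * xi)
    by (transitivity (c ^ 3 * xi - c ^ 2 - c * al - al ^ 2 - (c^2 + c * al + al ^ 2) * (xi * (c - al) - 1)); [rewrite Hid; ring| ring]).
  rewrite E1, E2.
  assert (B1 : Rabs (ep * al * (c * xi)) <= 4 * M / c * (4 * M) * 2).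
  { apply abs_mul_le; [apply abs_mul_le; auto|]. rewrite Rabs_pos_eq; nra. }
  assert (Hg : Rabs ga <= 5 * M).
  { rewrite Hga. eapply Rle_trans; [apply Rabs_triang|]. rewrite Rabs_Ropp. lra. }
  assert (B2 : Rabs (2 * ga * ep) <= 2 * (5 * M) * (4 * M / c)).
  { apply abs_mul_le; [|auto]. rewrite Rabs_mult. rewrite (Rabs_pos_eq 2) by lra.
    lra. }
  assert (B3 : Rabs (ep ^ 2) <= 4 * M / c * M).
  { replace (ep ^ 2) with (ep * ep) by ring. apply abs_mul_le; auto. lra. }
  assert (B4 : Rabs (al * al * al * xi) <= 4 * M * (4 * M) * (4 * M) * (2 / c)).
  { apply abs_mul_le; [apply abs_mul_le; [apply abs_mul_le|]|]; auto. rewrite Rabs_pos_eq; lra. }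
  eapply Rle_trans; [apply Rabs_triang|].
  eapply Rle_trans; [apply Rplus_le_compat_r; apply Rabs_triang|].
  eapply Rle_trans; [apply Rplus_le_compat_r; apply Rplus_le_compat_l; apply Rabs_triang|].
  rewrite Rabs_Ropp.
  unfold Rdiv in *.
  assert (M ^ 2 <= M ^ 3) by nra.
  assert (HMM : M ^ 2 * / c <= M ^ 3 * / c) by (apply Rmult_le_compat_r; lra).
  replace (4 * M * / c * (4 * M) * 2) with (32 * (M ^ 2 * / c)) in B1 by ring.
  replace (2 * (5 * M) * (4 * M * / c)) with (40 * (M ^ 2 * / c)) in B2 by ring.
  replace (4 * M * / c * M) with (4 * (M ^ 2 * / c)) in B3 by ring.
  replace (4 * M * (4 * M) * (4 * M) * (2 * / c)) with (128 * (M ^ 3 * / c)) in B4 by ring.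
  replace (204 * M ^ 3 * / c) with (204 * (M ^ 3 * / c)) by ring.
  lra.
Qed.

Lemma data (f g : R -> R) (M c delta : R) :
  (forall t, -1 <= t <= 1 -> continuous f t) ->
  (forall t, -1 <= t <= 1 -> continuous g t) ->
  1 <= M -> (forall t, -1 <= t <= 1 -> Rabs (f t) <= M /\ Rabs (g t) <= M) ->
  0 < delta ->
  (forall x0, Rabs x0 < delta ->
      (exists x, abel_solution f g x /\ x (-1) = x0) /\
      (forall x, abel_solution f g x -> x (-1) = x0 -> x 1 = x0)) ->
  Rmax (16 * M) (2 / delta) <= c ->
  exists X, CC X /\
    (forall t, -1 <= t <= 1 ->
      X t * (c - (RInt (ext g) (-1) t + RInt (fun s => ext f s * X s) (-1) t)) = 1 /\
      0 < X t /\ X t <= 2 / c /\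
      Rabs (RInt (ext g) (-1) t + RInt (fun s => ext f s * X s) (-1) t) <= 4 * M /\
      Rabs (RInt (fun s => ext f s * X s) (-1) t) <= 4 * M / c) /\
    RInt (fun s => ext f s * X s) (-1) 1 = - RInt (ext g) (-1) 1.
Proof.
  intros Cf Cg HM HB Hd Hcen Hc.
  assert (Hc1 : 16 * M <= c) by (eapply Rle_trans; [apply Rmax_l|exact Hc]).
  assert (Hc2 : 2 / delta <= c) by (eapply Rle_trans; [apply Rmax_r|exact Hc]).
  assert (Hcp : 0 < c) by lra.
  assert (Hx0 : Rabs (/ c) < delta).
  { rewrite Rabs_pos_eq by (left; apply Rinv_0_lt_compat; lra).
    assert (0 < 2 / delta) by (unfold Rdiv; apply Rmult_lt_0_compat; [lra|apply Rinv_0_lt_compat; lra]).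
    apply Rle_lt_trans with (/ (2 / delta)).
    - apply Rinv_le_contravar; lra.
    - replace (/ (2 / delta)) with (delta / 2) by (field; lra). lra. }
  destruct (Hcen (/ c) Hx0) as [[x [Hsx Hxm1]] Hret].
  assert (Hx1 : x 1 = / c) by (apply Hret; auto).
  pose proof (ode_bound f g x M c HM HB Hc1 Hsx Hxm1) as Hob.
  assert (Hpos : forall t, -1 <= t <= 1 -> 0 < x t) by (intros t Ht; apply Hob; auto).
  pose proof (ident f g x c Cf Cg Hsx Hxm1 ltac:(lra) Hpos) as Hid.
  assert (CCX : CC (ext x)) by (apply ext_cont; apply (sol_cont f g x Hsx)).
  assert (CCfX : CC (fun s => ext f s * ext x s)) by (apply CC_mult; auto; apply ext_cont; auto).
  assert (Hxle : forall t, -1 <= t <= 1 -> ext x t <= 2 / c).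
  { intros t Ht. rewrite ext_id by auto. destruct (Hob t Ht) as [Hp Hb].
    assert (c / 2 <= / x t) by (unfold Rabs in Hb; destruct Rcase_abs in Hb; lra).
    rewrite <- (Rinv_inv (x t)). replace (2 / c) with (/ (c / 2)) by (field; lra).
    apply Rinv_le_contravar; lra. }
  exists (ext x). split; [exact CCX|]. split.
  - intros t Ht.
    assert (Ea : RInt (ext g) (-1) t + RInt (fun s => ext f s * ext x s) (-1) t = c - / x t)
      by (rewrite (Hid t Ht); ring).
    rewrite Ea. rewrite ext_id by auto. destruct (Hob t Ht) as [Hp Hb].
    split; [field; lra|]. split; auto. split; [rewrite <- (ext_id x t) by auto; auto|].
    split. { replace (c - / x t) with (- (/ x t - c)) by ring. rewrite Rabs_Ropp; auto. }
    replace (4 * M / c) with ((t - -1) * (M * (2 / c)) + (1 - t) * (M * (2 / c))) by (field; lra).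
    assert (0 <= (1 - t) * (M * (2 / c))).
    { apply Rmult_le_pos; [lra|]. apply Rmult_le_pos; [lra|]. unfold Rdiv; apply Rmult_le_pos; [lra|].
      left; apply Rinv_0_lt_compat; lra. }
    assert (Rabs (RInt (fun s => ext f s * ext x s) (-1) t) <= (t - -1) * (M * (2 / c))); [|lra].
    apply int_bound; [lra|auto|]. intros s Hs. apply abs_mul_le.
    + rewrite ext_id by lra. apply HB; lra.
    + assert (0 < ext x s) by (rewrite ext_id by lra; apply Hpos; lra).
      rewrite Rabs_pos_eq by lra. apply Hxle; lra.
  - pose proof (Hid 1 ltac:(lra)) as E. rewrite Hx1, Rinv_inv in E. lra.
Qed.

Lemma RInt_split5 (h u1 u2 u3 u4 u5 : R -> R) a b : CC u1 -> CC u2 -> CC u3 -> CC u4 -> CC u5 ->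
  (forall t, h t = u1 t + u2 t + u3 t + u4 t + u5 t) ->
  RInt h a b = RInt u1 a b + RInt u2 a b + RInt u3 a b + RInt u4 a b + RInt u5 a b.
Proof.
  intros H1 H2 H3 H4 H5 He.
  rewrite (RInt_split3 h (fun t => u1 t + u2 t + u3 t) u4 u5); auto.
  - rewrite (RInt_split3 (fun t => u1 t + u2 t + u3 t) u1 u2 u3); auto.
  - apply CC_plus; auto. apply CC_plus; auto.
Qed.

Lemma cont_abs_pt (h : R -> R) t : CC h -> continuity_pt (fun s => Rabs (h s)) t.
Proof.
  intros H. change (continuity_pt (comp Rabs h) t). apply continuity_pt_comp.
  - apply continuity_pt_filterlim. apply H.
  - apply Rcontinuity_abs.
Qed.

Theorem theorem1 (f g : R -> R) :
  real_analytic_on_I f -> real_analytic_on_I g ->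
  abel_center f g ->
  forall k : nat, (k <= 2)%nat ->
    RInt (fun t => f t * (RInt g (-1) t) ^ k) (-1) 1 = 0.
Proof.
  intros Haf Hag [delta [Hd Hcen]] k Hk.
  pose proof (analytic_cont f Haf) as Cf. pose proof (analytic_cont g Hag) as Cg.
  assert (CCf : CC (ext f)) by (apply ext_cont; auto).
  assert (CCg : CC (ext g)) by (apply ext_cont; auto).
  assert (CCG : CC (fun t => RInt (ext g) (-1) t)) by (apply CC_prim; auto).
  destruct (continuity_ab_maj (fun t => Rabs (ext f t)) (-1) 1) as [m1 [Hm1 _]];
    [lra| intros; apply cont_abs_pt; auto|].
  destruct (continuity_ab_maj (fun t => Rabs (ext g t)) (-1) 1) as [m2 [Hm2 _]];
    [lra| intros; apply cont_abs_pt; auto|].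
  set (M := 1 + Rabs (ext f m1) + Rabs (ext g m2)).
  assert (HM : 1 <= M) by (unfold M; pose proof (Rabs_pos (ext f m1)); pose proof (Rabs_pos (ext g m2)); lra).
  assert (HBe : forall t, -1 <= t <= 1 -> Rabs (ext f t) <= M /\ Rabs (ext g t) <= M).
  { intros t Ht. specialize (Hm1 t Ht). specialize (Hm2 t Ht).
    unfold M; pose proof (Rabs_pos (ext f m1)); pose proof (Rabs_pos (ext g m2)); split; lra. }
  assert (HB : forall t, -1 <= t <= 1 -> Rabs (f t) <= M /\ Rabs (g t) <= M).
  { intros t Ht. rewrite <- (ext_id f t Ht), <- (ext_id g t Ht). auto. }
  set (c0 := Rmax (16 * M) (2 / delta)).
  assert (Hc0 : 0 < c0) by (unfold c0; eapply Rlt_le_trans; [|apply Rmax_l]; lra).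
  pose proof (data f g M) as D.
  assert (HG1 : RInt (ext g) (-1) 1 = 0).
  { apply (zero_of_small _ (4 * M) c0 Hc0). intros c Hc.
    destruct (D c delta Cf Cg HM HB Hd Hcen Hc) as [X [_ [Hp HE1]]].
    replace (RInt (ext g) (-1) 1) with (- RInt (fun s => ext f s * X s) (-1) 1) by lra.
    rewrite Rabs_Ropp. apply Hp; lra. }
  set (G := fun t => RInt (ext g) (-1) t) in *.
  set (m := fun n => RInt (fun t => ext f t * G t ^ n) (-1) 1).
  assert (Hm0 : m 0%nat = 0).
  { apply (zero_of_small _ (16 * M ^ 2) c0 Hc0). intros c Hc.
    assert (Hcp : 0 < c) by (unfold c0 in Hc; pose proof (Rmax_l (16 * M) (2 / delta)); lra).
    assert (Hc16 : 16 * M <= c) by (unfold c0 in Hc; pose proof (Rmax_l (16 * M) (2 / delta)); lra).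
    destruct (D c delta Cf Cg HM HB Hd Hcen Hc) as [X [CX [Hp HE1]]].
    set (E := fun t => RInt (fun s => ext f s * X s) (-1) t) in *.
    assert (HE : E 1 = 0) by (revert HE1 HG1; unfold E, G; cbv beta; intros; lra).
    assert (CfX : CC (fun s => ext f s * X s)) by (apply CC_mult; auto).
    assert (S : RInt (fun t => c * (ext f t * X t)) (-1) 1 =
       RInt (fun t => ext f t * G t ^ 0) (-1) 1 + RInt (fun t => ext f t * (c * X t - 1)) (-1) 1
       + RInt (fun t => 0 * ext f t) (-1) 1).
    { apply RInt_split3.
      - apply CC_mult; auto. apply CC_pow; auto.
      - apply CC_mult; auto. apply CC_minus; [apply CC_mult; auto; apply CC_const| apply CC_const].
      - apply CC_mult; auto; apply CC_const.
      - intros t. simpl. ring. }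
    rewrite RInt_scalR in S by auto. rewrite (RInt_scalR (ext f)) in S by auto.
    fold (E 1) in S. rewrite HE in S. fold (m 0%nat) in S.
    replace (m 0%nat) with (- RInt (fun t => ext f t * (c * X t - 1)) (-1) 1) by lra.
    rewrite Rabs_Ropp.
    replace (16 * M ^ 2 / c) with ((1 - -1) * (M * (8 * M / c))) by (field; lra).
    apply int_bound; [lra| |].
    { apply CC_mult; auto. apply CC_minus; [apply CC_mult; auto; apply CC_const| apply CC_const]. }
    intros t Ht. destruct (Hp t Ht) as [Hi [Hx1 [Hx2 [Ha He]]]].
    apply abs_mul_le; [apply HBe; auto|].
    apply (bnd0 M c (G t + E t)); auto; lra. }
  assert (Hmm1 : m 1%nat = 0).
  { apply (zero_of_small _ (72 * M ^ 3) c0 Hc0). intros c Hc.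
    assert (Hcp : 0 < c) by (unfold c0 in Hc; pose proof (Rmax_l (16 * M) (2 / delta)); lra).
    assert (Hc16 : 16 * M <= c) by (unfold c0 in Hc; pose proof (Rmax_l (16 * M) (2 / delta)); lra).
    destruct (D c delta Cf Cg HM HB Hd Hcen Hc) as [X [CX [Hp HE1]]].
    set (E := fun t => RInt (fun s => ext f s * X s) (-1) t) in *.
    assert (HE : E 1 = 0) by (revert HE1 HG1; unfold E, G; cbv beta; intros; lra).
    assert (CfX : CC (fun s => ext f s * X s)) by (apply CC_mult; auto).
    assert (CE : CC E) by (apply CC_prim; auto).
    set (R1 := fun t => ext f t * (E t + (c ^ 2 * X t - c - (G t + E t)))).
    assert (CR1 : CC R1).
    { unfold R1. apply CC_mult; auto. apply CC_plus; auto.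
      apply CC_minus; [apply CC_minus|]; [apply CC_mult; auto; apply CC_const|apply CC_const|apply CC_plus; auto]. }
    assert (S : RInt (fun t => c ^ 2 * (ext f t * X t)) (-1) 1 =
       RInt (fun t => c * (ext f t * G t ^ 0)) (-1) 1 + RInt (fun t => ext f t * G t ^ 1) (-1) 1
       + RInt R1 (-1) 1).
    { apply RInt_split3; auto.
      - apply (CC_mult (fun _ => c)); [apply CC_const|]. apply CC_mult; auto. apply CC_pow; auto.
      - apply CC_mult; auto. apply CC_pow; auto.
      - intros t. unfold R1. simpl. ring. }
    rewrite RInt_scalR in S by auto. rewrite RInt_scalR in S.
    2:{ apply CC_mult; auto. apply CC_pow; auto. }
    fold (E 1) in S. rewrite HE in S. fold (m 0%nat) in S. fold (m 1%nat) in S. rewrite Hm0 in S.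
    replace (m 1%nat) with (- RInt R1 (-1) 1) by lra.
    rewrite Rabs_Ropp.
    replace (72 * M ^ 3 / c) with ((1 - -1) * (M * (36 * M ^ 2 / c))) by (field; lra).
    apply int_bound; [lra|auto|].
    intros t Ht. destruct (Hp t Ht) as [Hi [Hx1 [Hx2 [Ha He]]]].
    apply abs_mul_le; [apply HBe; auto|].
    apply (bnd1 M c (G t + E t)); auto; lra. }
  assert (Hmm2 : m 2%nat = 0).
  { apply (zero_of_small _ (408 * M ^ 4) c0 Hc0). intros c Hc.
    assert (Hcp : 0 < c) by (unfold c0 in Hc; pose proof (Rmax_l (16 * M) (2 / delta)); lra).
    assert (Hc16 : 16 * M <= c) by (unfold c0 in Hc; pose proof (Rmax_l (16 * M) (2 / delta)); lra).
    destruct (D c delta Cf Cg HM HB Hd Hcen Hc) as [X [CX [Hp HE1]]].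
    pose proof (int_fxe_zero (ext f) X CCf CX) as Hz. simpl in Hz.
    set (E := fun t => RInt (fun s => ext f s * X s) (-1) t) in *.
    assert (HE : E 1 = 0) by (revert HE1 HG1; unfold E, G; cbv beta; intros; lra).
    assert (HEm : E (-1) = 0) by (unfold E; rewrite RInt_point; reflexivity).
    assert (CfX : CC (fun s => ext f s * X s)) by (apply CC_mult; auto).
    assert (CE : CC E) by (apply CC_prim; auto).
    set (R2 := fun t => ext f t * (c * E t * (1 - c * X t) + (2 * G t * E t + E t ^ 2)
                 + (c ^ 3 * X t - c ^ 2 - c * (G t + E t) - (G t + E t) ^ 2))).
    assert (CR2 : CC R2).
    { unfold R2. apply CC_mult; auto.
      apply CC_plus; [apply CC_plus|].
      - apply CC_mult; [apply CC_mult; auto; apply CC_const|].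
        apply CC_minus; [apply CC_const|apply CC_mult; auto; apply CC_const].
      - apply CC_plus; [apply CC_mult; auto; apply CC_mult; auto; apply CC_const|apply CC_pow; auto].
      - apply CC_minus; [apply CC_minus; [apply CC_minus|]|].
        + apply CC_mult; auto; apply CC_const.
        + apply CC_const.
        + apply CC_mult; [apply CC_const|apply CC_plus; auto].
        + apply CC_pow; apply CC_plus; auto. }
    assert (CZ : CC (fun t => E t * (ext f t * X t) + ext f t * X t * E t)).
    { apply CC_plus; apply CC_mult; auto. }
    assert (S : RInt (fun t => c ^ 3 * (ext f t * X t)) (-1) 1 =
       RInt (fun t => c ^ 2 * (ext f t * G t ^ 0)) (-1) 1 + RInt (fun t => c * (ext f t * G t ^ 1)) (-1) 1
       + RInt (fun t => ext f t * G t ^ 2) (-1) 1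
       + RInt (fun t => (c ^ 2 / 2) * (E t * (ext f t * X t) + ext f t * X t * E t)) (-1) 1
       + RInt R2 (-1) 1).
    { apply RInt_split5; auto.
      - apply (CC_mult (fun _ => _)); [apply CC_const|]. apply CC_mult; auto. apply CC_pow; auto.
      - apply (CC_mult (fun _ => c)); [apply CC_const|]. apply CC_mult; auto. apply CC_pow; auto.
      - apply CC_mult; auto. apply CC_pow; auto.
      - apply (CC_mult (fun _ => _)); [apply CC_const|auto].
      - intros t. unfold R2. simpl. field. }
    rewrite RInt_scalR in S by auto. rewrite RInt_scalR in S.
    2:{ apply CC_mult; auto. apply CC_pow; auto. }
    rewrite RInt_scalR in S.
    2:{ apply CC_mult; auto. apply CC_pow; auto. }
    rewrite RInt_scalR in S by auto.
    rewrite Hz in S.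
    fold (E 1) in S. rewrite HE, HEm in S. fold (m 0%nat) in S. fold (m 1%nat) in S.
    fold (m 2%nat) in S. rewrite Hm0, Hmm1 in S.
    replace (m 2%nat) with (- RInt R2 (-1) 1) by lra.
    rewrite Rabs_Ropp.
    replace (408 * M ^ 4 / c) with ((1 - -1) * (M * (204 * M ^ 3 / c))) by (field; lra).
    apply int_bound; [lra|auto|].
    intros t Ht. destruct (Hp t Ht) as [Hi [Hx1 [Hx2 [Ha He]]]].
    apply abs_mul_le; [apply HBe; auto|].
    apply (bnd2 M c (G t + E t)); auto; try lra. }
  assert (Hgoal : RInt (fun t => f t * RInt g (-1) t ^ k) (-1) 1 = m k).
  { unfold m, G. apply RInt_ext. intros x Hx.
    rewrite Rmin_left in Hx by lra. rewrite Rmax_right in Hx by lra.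
    rewrite ext_id by lra. f_equal. f_equal. apply RInt_ext.
    intros y Hy. rewrite ext_id; [reflexivity|].
    unfold Rmin, Rmax in Hy. destruct Rle_dec in Hy; lra. }
  rewrite Hgoal. destruct k as [|[|[|k]]]; auto. lia.
Qed.
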